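(* Let $P(T)=a_0T^N+a_1T^{N-1}+\cdots+a_N\in\mathbb{L}_p[T]$ with $a_0\neq 0$, $a_N\neq0$, let $s=s^P_{\max}$ and $m=m^P_{\max}$, let $u\in\mathcal{O}_{\mathbb{L}_p}^*$, and write $P_u(T)=P(T+up^{s})=\sum_{i=0}^Nb_{N-i}T^i$. Then: (1) on the range $0\leq x\leq m$, the Newton polygons $\mathrm{NP}(P_u)$ and $\mathrm{NP}(P)$ coincide; (2) for $m<k\leq N$, the point $(k,v_p(b_k))$ lies on or above $\mathrm{NP}(P)$, i.e. $v_p(b_k)\geq v_p(a_m)+s(k-m)$.
   Context: $\mathbb{L}_p$ is the $p$-adic Mal'cev–Neumann field of formal sums $\sum_{x\in\mathbb{Q}}[\alpha_x]p^x$ ($\alpha_x\in\bar{\mathbb{F}}_p$, $[\cdot]$ Teichmüller lift, well-ordered support), with valuation $v_p$ = minimum of support, valuation ring $\mathcal{O}_{\mathbb{L}_p}$ and units $\mathcal{O}_{\mathbb{L}_p}^*$. $\mathrm{NP}(P)$ is the lower boundary of the convex hull of the points $(k,v_p(a_k))$ with $a_k\neq0$; its vertices are the breakpoints; $m^P_{\max}$ is the largest breakpoint $<N$ and $s^P_{\max}=\frac{v_p(a_N)-v_p(a_{m^P_{\max}})}{N-m^P_{\max}}$ is the maximal slope. *)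

(* Defs.v *)
From HB Require Import structures.
From mathcomp Require Import all_boot all_order all_algebra.
Set Implicit Arguments. Unset Strict Implicit. Unset Printing Implicit Defensive.
Import Order.TTheory GRing.Theory Num.Theory.
Local Open Scope ring_scope.

(* Abstract interface for the p-adic Mal'cev--Neumann field L_p:
   a field K with a Q-valued valuation v (only meaningful on nonzero
   elements; v 0 stands for +oo and is never used) and rational powers
   pw q = p^q of p (the elements [1] p^q of L_p). *)
Record padic_MN_like (p : nat) (K : fieldType) (v : K -> rat) (pw : rat -> K)
  : Prop := {
  vM : forall x y : K, x != 0 -> y != 0 -> v (x * y) = v x + v y;
  vD : forall x y : K, x != 0 -> y != 0 -> x + y != 0 ->
         Num.min (v x) (v y) <= v (x + y);
  pw_neq0 : forall q, pw q != 0;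
  v_pw : forall q, v (pw q) = q;
  pwD : forall q r, pw (q + r) = pw q * pw r;
  pw1 : pw 1 = p%:R
}.

Section NewtonPolygon.
Variables (K : fieldType) (v : K -> rat).

Definition in_hull (c : nat -> K) (N : nat) (x y : rat) : Prop :=
  exists w : 'I_N.+1 -> rat,
    [/\ forall i, 0 <= w i,
        \sum_i w i = 1,
        forall i, w i != 0 -> c i != 0,
        \sum_i w i * (i : nat)%:R = x
      & \sum_i w i * v (c i) = y].

Definition on_NP (c : nat -> K) (N : nat) (x y : rat) : Prop :=
  in_hull c N x y /\ forall y', in_hull c N x y' -> y <= y'.

Definition above_NP (c : nat -> K) (N : nat) (x y : rat) : Prop :=
  exists y', in_hull c N x y' /\ y' <= y.

Definition breakpoint (c : nat -> K) (N : nat) (k : nat) : Prop :=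
  [/\ (k <= N)%N, c k != 0, on_NP c N k%:R (v (c k))
    & ~ exists x1 y1 x2 y2 (t : rat),
        [/\ on_NP c N x1 y1, on_NP c N x2 y2, x1 < k%:R < x2,
            0 < t < 1
          & k%:R = t * x1 + (1 - t) * x2 /\ v (c k) = t * y1 + (1 - t) * y2]].

End NewtonPolygon.

(* Coefficients a_k of P = a_0 T^N + ... + a_N, N = deg P. *)
Definition rcoef (K : fieldType) (P : {poly K}) (k : nat) : K :=
  P`_((size P).-1 - k).

(* Main.v *)
Require Import Defs.
From HB Require Import structures.
From mathcomp Require Import all_boot all_order all_algebra.
From mathcomp Require Import ring lra zify.
Import Order.TTheory GRing.Theory Num.Theory.
Local Open Scope ring_scope.

Lemma arith1 (F G s j m N th : rat) : th * (N - j) = m - j -> th < 1 -> F < G ->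
  G + s * m <= (F + s * j) + th * ((G + s * N) - (F + s * j)) -> False.
Proof.
move=> e t1 FG h.
have e2 : th * ((G + s * N) - (F + s * j)) = th * (G - F) + s * (m - j).
  by rewrite -e; ring.
have : 0 < (1 - th) * (G - F) by apply: mulr_gt0; lra.
rewrite e2 in h. nra.
Qed.

Lemma arith2 (fk s k x1 x2 y1 y2 t : rat) : 0 < t < 1 ->
  fk + s * x1 <= y1 -> fk + s * x2 <= y2 ->
  k = t * x1 + (1 - t) * x2 -> fk + s * k = t * y1 + (1 - t) * y2 ->
  y2 = fk + s * x2.
Proof.
move=> /andP [t0 t1] h1 h2 ek ey.
have : t * (y1 - (fk + s * x1)) + (1 - t) * (y2 - (fk + s * x2)) = 0.
  have -> : t * (y1 - (fk + s * x1)) + (1 - t) * (y2 - (fk + s * x2)) =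
    (t * y1 + (1 - t) * y2) - (fk + s * (t * x1 + (1 - t) * x2)) by ring.
  by rewrite -ey -ek subrr.
have A : 0 <= t * (y1 - (fk + s * x1)) by apply: mulr_ge0; lra.
move=> e; have B : (1 - t) * (y2 - (fk + s * x2)) = 0.
  have C : 0 <= (1 - t) * (y2 - (fk + s * x2)) by apply: mulr_ge0; lra.
  lra.
move/eqP: B; rewrite mulf_eq0 => /orP [/eqP|/eqP]; lra.
Qed.

Lemma arith3 (th M xg x yg y Am s : rat) : 0 <= th -> th * (M - xg) = x - xg ->
  Am - yg <= s * (M - xg) -> yg + s * (x - xg) <= y -> yg + th * (Am - yg) <= y.
Proof.
move=> t0 e h1 h2.
have : th * (Am - yg) <= th * (s * (M - xg)) by apply: ler_wpM2l.
have -> : th * (s * (M - xg)) = s * (x - xg) by rewrite -e; ring.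
lra.
Qed.

Set Implicit Arguments. Unset Strict Implicit.

Lemma v1 (K : fieldType) (v : K -> rat)
  (HvM : forall x y : K, x != 0 -> y != 0 -> v (x * y) = v x + v y) : v 1 = 0.
Proof.
have := HvM 1 1 (oner_neq0 _) (oner_neq0 _); rewrite mulr1 => h.
have : v 1 + v 1 - v 1 = v 1 - v 1 by rewrite -h.
by rewrite addrK subrr.
Qed.

Lemma vN1 (K : fieldType) (v : K -> rat)
  (HvM : forall x y : K, x != 0 -> y != 0 -> v (x * y) = v x + v y) : v (-1) = 0.
Proof.
have n1 : (-1 : K) != 0 by rewrite oppr_eq0 oner_neq0.
have := HvM _ _ n1 n1; rewrite mulrNN mulr1 (v1 HvM) => h. lra.
Qed.

Lemma vN (K : fieldType) (v : K -> rat)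
  (HvM : forall x y : K, x != 0 -> y != 0 -> v (x * y) = v x + v y) x :
  x != 0 -> v (- x) = v x.
Proof.
move=> hx; rewrite -mulN1r HvM ?oppr_eq0 ?oner_neq0 //; by rewrite (vN1 HvM) add0r.
Qed.

Lemma vX (K : fieldType) (v : K -> rat)
  (HvM : forall x y : K, x != 0 -> y != 0 -> v (x * y) = v x + v y) x n :
  x != 0 -> v (x ^+ n) = n%:R * v x.
Proof.
move=> hx; elim: n => [|n IH]; first by rewrite expr0 (v1 HvM) mul0r.
by rewrite exprS HvM ?expf_neq0 // IH -nat1r mulrDl mul1r.
Qed.

Lemma vnat (K : fieldType) (v : K -> rat)
  (HvM : forall x y : K, x != 0 -> y != 0 -> v (x * y) = v x + v y)
  (HvD : forall x y : K, x != 0 -> y != 0 -> x + y != 0 -> Num.min (v x) (v y) <= v (x + y))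
  n : (n%:R : K) != 0 -> 0 <= v n%:R.
Proof.
elim: n => [|n IH]; first by rewrite eqxx.
rewrite -natr1 => h.
have [h0|h0] := eqVneq (n%:R : K) 0.
  by rewrite h0 add0r (v1 HvM).
apply: le_trans (HvD _ _ h0 (oner_neq0 _) h).
by rewrite le_min (v1 HvM) lexx IH.
Qed.

Lemma vsum (K : fieldType) (v : K -> rat)
  (HvD : forall x y : K, x != 0 -> y != 0 -> x + y != 0 -> Num.min (v x) (v y) <= v (x + y))
  (I : Type) (r : seq I) (Pr : pred I) (F : I -> K) (Q : rat -> Prop) :
  (forall a b, Q a -> Q b -> Q (Num.min a b)) -> (forall a b, Q a -> a <= b -> Q b) ->
  (forall i, Pr i -> F i != 0 -> Q (v (F i))) ->
  \sum_(i <- r | Pr i) F i != 0 -> Q (v (\sum_(i <- r | Pr i) F i)).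
Proof.
move=> Qmin Qup hF; elim: r => [|x r IH]; first by rewrite big_nil eqxx.
rewrite big_cons; case: ifP => // hx.
set S := \sum_(_ <- _ | _) _ in IH *.
have [->|hS] := eqVneq S 0; first by rewrite addr0 => /(hF _ hx).
have [->|hFx] := eqVneq (F x) 0; first by rewrite add0r => /IH.
move=> hs; have := HvD _ _ hFx hS hs.
by apply: Qup; apply: Qmin; [apply: hF | apply: IH].
Qed.

Lemma vstrict (K : fieldType) (v : K -> rat)
  (HvM : forall x y : K, x != 0 -> y != 0 -> v (x * y) = v x + v y)
  (HvD : forall x y : K, x != 0 -> y != 0 -> x + y != 0 -> Num.min (v x) (v y) <= v (x + y))
  (x S : K) : x != 0 -> (S != 0 -> v x < v S) -> x + S != 0 /\ v (x + S) = v x.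
Proof.
move=> hx hS.
have [->|S0] := eqVneq S 0; first by rewrite addr0.
have hlt := hS S0.
have nz : x + S != 0.
  apply/negP => /eqP h; move: hlt.
  have -> : S = - x by apply/eqP; rewrite -subr_eq0 opprK addrC h.
  by rewrite (vN HvM) // ltxx.
split => //; apply/eqP; rewrite eq_le; apply/andP; split.
  have e : x = (x + S) + (- S) by rewrite addrK.
  have := HvD _ _ nz (eq_ind _ (fun z => ~~ z) S0 _ (esym (oppr_eq0 S))) (eq_ind _ (fun z => z != 0) hx _ e).
  rewrite -e (vN HvM) // ge_min => /orP [] // h; exfalso.
  by move: (le_lt_trans h hlt); rewrite ltxx.
have := HvD _ _ hx S0 nz; rewrite ge_min => /orP [] // h.
by apply: le_trans h; apply: ltW.
Qed.

Lemma coef_XaddCX (R : comNzRingType) (c : R) i n :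
  (('X + c%:P) ^+ i)`_n = ('C(i, n))%:R * c ^+ (i - n).
Proof.
elim: i n => [|i IH] n.
  rewrite expr0 coef1; case: n => [|n] /=.
  by rewrite bin0 subnn expr0 mulr1.
  by rewrite bin0n /= mul0r.
rewrite exprSr mulrDr coefD coefMC coefMX IH.
case: n => [|n] /=.
  by rewrite IH !bin0 !subn0 add0r !mul1r exprSr.
rewrite IH binS natrD mulrDl addrC subSS; congr (_ + _).
have [lt|ge] := ltnP i n.+1.
  by rewrite bin_small // !mul0r.
by rewrite -mulrA -exprSr subnSK.
Qed.

Lemma sum_delta (N k : nat) (F : 'I_N.+1 -> rat) (hk : (k < N.+1)%N) :
  \sum_(i < N.+1) ((i : nat) == k)%:R * F i = F (Ordinal hk).
Proof.
rewrite (bigD1 (Ordinal hk)) //= eqxx mul1r big1 ?addr0 // => i hi.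
suff -> : ((i : nat) == k) = false by rewrite mul0r.
by apply/negP => /eqP e; move: hi; rewrite -val_eqE /= e eqxx.
Qed.

Lemma hull_pt (K : fieldType) (v : K -> rat) (c : nat -> K) N k :
  (k <= N)%N -> c k != 0 -> in_hull v c N k%:R (v (c k)).
Proof.
move=> hk ck; exists (fun i : 'I_N.+1 => ((i : nat) == k)%:R); split.
- by move=> i; rewrite ler0n.
- rewrite -[RHS](sum_delta (fun _ => 1) hk); apply: eq_bigr => i _; by rewrite mulr1.
- move=> i; case: (eqVneq (i : nat) k) => [e|ne]; first by rewrite e.
  by move=> /negP; rewrite /=; case; apply/eqP.
- exact: (sum_delta (fun i : 'I_N.+1 => (i : nat)%:R) hk).
- exact: (sum_delta (fun i : 'I_N.+1 => v (c i)) hk).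
Qed.

Lemma hull_conv (K : fieldType) (v : K -> rat) (c : nat -> K) N x1 y1 x2 y2 t :
  0 <= t <= 1 -> in_hull v c N x1 y1 -> in_hull v c N x2 y2 ->
  in_hull v c N (t * x1 + (1 - t) * x2) (t * y1 + (1 - t) * y2).
Proof.
move=> /andP [t0 t1] [w1 [p1 s1 n1 x1E y1E]] [w2 [p2 s2 n2 x2E y2E]].
exists (fun i => t * w1 i + (1 - t) * w2 i); split.
- by move=> i; apply: addr_ge0; apply: mulr_ge0 => //; rewrite subr_ge0.
- by rewrite big_split /= -!mulr_sumr s1 s2 !mulr1 addrC subrK.
- move=> i hi; have [h1|h1] := eqVneq (w1 i) 0.
    have [h2|h2] := eqVneq (w2 i) 0; last by apply: n2.
    by move: hi; rewrite h1 h2 !mulr0 addr0 eqxx.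
  by apply: n1.
- rewrite -x1E -x2E !mulr_sumr -big_split /=; apply: eq_bigr => i _.
  by rewrite mulrDl !mulrA.
- rewrite -y1E -y2E !mulr_sumr -big_split /=; apply: eq_bigr => i _.
  by rewrite mulrDl !mulrA.
Qed.

Lemma hull_seg (K : fieldType) (v : K -> rat) (c : nat -> K) N x1 y1 x2 y2 x :
  x1 < x2 -> x1 <= x <= x2 -> in_hull v c N x1 y1 -> in_hull v c N x2 y2 ->
  in_hull v c N x (y1 + (x - x1) / (x2 - x1) * (y2 - y1)).
Proof.
move=> lt12 /andP [h1 h2] H1 H2.
set t := (x2 - x) / (x2 - x1).
have d0 : x2 - x1 != 0 by rewrite subr_eq0 gt_eqF.
have t01 : 0 <= t <= 1.
  rewrite /t; apply/andP; split.
    by apply: divr_ge0; rewrite subr_ge0 // ltW.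
  by rewrite ler_pdivrMr ?subr_gt0 // mul1r lerD2l lerN2.
have := hull_conv t01 H1 H2.
have -> : t * x1 + (1 - t) * x2 = x by rewrite /t; field.
suff -> : t * y1 + (1 - t) * y2 = y1 + (x - x1) / (x2 - x1) * (y2 - y1) by [].
by rewrite /t; field.
Qed.

Lemma hull_lin (K : fieldType) (v : K -> rat) (c : nat -> K) N x y (al be : rat) :
  (forall i : 'I_N.+1, c i != 0 -> al + be * (i : nat)%:R <= v (c i)) ->
  in_hull v c N x y -> al + be * x <= y.
Proof.
move=> hc [w [p s n xE yE]].
rewrite -xE -yE -subr_ge0 mulr_sumr.
have -> : al = \sum_i w i * al by rewrite -mulr_suml s mul1r.
rewrite -big_split /= -sumrB; apply: sumr_ge0 => i _.
have [->|wi] := eqVneq (w i) 0.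
  by rewrite !mul0r mulr0; lra.
rewrite (_ : _ - _ = w i * (v (c i) - (al + be * (i : nat)%:R))); last by ring.
by apply: mulr_ge0 => //; rewrite subr_ge0; apply: hc; apply: n.
Qed.

Lemma hull_tight (K : fieldType) (v : K -> rat) (c : nat -> K) N x y (al be : rat) k :
  (forall i : 'I_N.+1, c i != 0 -> al + be * (i : nat)%:R <= v (c i)) ->
  (forall i : 'I_N.+1, c i != 0 -> v (c i) = al + be * (i : nat)%:R -> (i <= k)%N) ->
  in_hull v c N x y -> y = al + be * x -> x <= k%:R.
Proof.
move=> hc hk [w [p s n xE yE]] e.
have : \sum_i w i * (v (c i) - (al + be * (i : nat)%:R)) = 0.
  have E i : w i * (v (c i) - (al + be * (i : nat)%:R)) =
      w i * v (c i) - (w i * al + be * (w i * (i : nat)%:R)) by ring.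
  under eq_bigr => i _ do rewrite E.
  rewrite sumrB big_split /= -mulr_suml s mul1r -mulr_sumr xE yE e; ring.
move/eqP; rewrite psumr_eq0 => [/allP h|i _]; last first.
  have [->|wi] := eqVneq (w i) 0; first by rewrite mul0r.
  by apply: mulr_ge0 => //; rewrite subr_ge0; apply: hc; apply: n.
rewrite -xE.
have -> : (k%:R : rat) = \sum_i w i * k%:R by rewrite -mulr_suml s mul1r.
apply: ler_sum => i _.
have [->|wi] := eqVneq (w i) 0; first by rewrite !mul0r.
apply: ler_wpM2l => //; rewrite ler_nat; apply: hk; first by apply: n.
have := h i (mem_index_enum i); rewrite mulf_eq0 (negbTE wi) /= subr_eq0.
by move/eqP.
Qed.

Lemma hull_transfer (K : fieldType) (v : K -> rat) (c d : nat -> K) N x y :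
  (forall i : 'I_N.+1, c i != 0 -> d i != 0 /\ v (d i) = v (c i)) ->
  in_hull v c N x y -> in_hull v d N x y.
Proof.
move=> hcd [w [p s n xE yE]]; exists w; split => //.
  by move=> i /n /hcd [].
rewrite -yE; apply: eq_bigr => i _.
have [->|wi] := eqVneq (w i) 0; first by rewrite !mul0r.
by have [_ ->] := hcd i (n i wi).
Qed.

Lemma reindex_w N (w : 'I_N.+1 -> rat) (gm : 'I_N.+1 -> 'I_N.+1) (F : 'I_N.+1 -> rat) :
  \sum_g (\sum_(i | gm i == g) w i) * F g = \sum_i w i * F (gm i).
Proof.
rewrite [RHS](partition_big gm predT) //=; apply: eq_bigr => g _.
rewrite mulr_suml; apply: eq_bigr => i /eqP -> //.
Qed.

Lemma hull_reduce (K : fieldType) (v : K -> rat) (c d : nat -> K) N x y (s : rat) :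
  (forall i : 'I_N.+1, c i != 0 -> exists g : 'I_N.+1,
      [/\ d g != 0, (g <= i)%N & v (d g) + s * ((i : nat)%:R - (g : nat)%:R) <= v (c i)]) ->
  in_hull v c N x y ->
  exists xg yg, [/\ in_hull v d N xg yg, xg <= x & yg + s * (x - xg) <= y].
Proof.
move=> hcd [w [p sw n xE yE]].
have : forall i : 'I_N.+1, exists g : 'I_N.+1, c i != 0 ->
    [/\ d g != 0, (g <= i)%N & v (d g) + s * ((i : nat)%:R - (g : nat)%:R) <= v (c i)].
  move=> i; have [ci|ci] := eqVneq (c i) 0; first by exists i => /eqP; rewrite ci.
  by have [g hg] := hcd i ci; exists g.
case/fin_all_exists => gm hgm.
pose w' g := \sum_(i | gm i == g) w i.
exists (\sum_g w' g * (g : nat)%:R), (\sum_g w' g * v (d g)); split.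
- exists w'; split => //.
  + by move=> g; apply: sumr_ge0.
  + rewrite -sw; transitivity (\sum_i w i * 1); last by apply: eq_bigr => i _; rewrite mulr1.
    transitivity (\sum_g w' g * 1); first by apply: eq_bigr => g _; rewrite mulr1.
    exact: (reindex_w w gm (fun _ => 1)).
  + move=> g; apply: contraR => dg; rewrite /w' big1 // => i /eqP gi.
    apply/eqP; apply: contraR dg => wi; rewrite -gi.
    by have [] := hgm i (n i wi).
- rewrite reindex_w -xE; apply: ler_sum => i _.
  have [->|wi] := eqVneq (w i) 0; first by rewrite !mul0r.
  by apply: ler_wpM2l => //; rewrite ler_nat; have [] := hgm i (n i wi).
- rewrite !reindex_w -xE -yE -sumrB mulr_sumr -big_split /=; apply: ler_sum => i _.
  have [->|wi] := eqVneq (w i) 0; first by rewrite !mul0r subrr mulr0 addr0.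
  have [_ _ h] := hgm i (n i wi).
  rewrite (_ : _ + _ = w i * (v (d (gm i)) + s * ((i : nat)%:R - (gm i : nat)%:R))); last by ring.
  by apply: ler_wpM2l.
Qed.

Lemma argmin_last (Q : nat -> bool) (F : nat -> rat) n :
  (exists i0, (i0 <= n)%N && Q i0) ->
  exists i, [/\ (i <= n)%N, Q i, (forall j, (j <= n)%N -> Q j -> F i <= F j)
              & (forall j, (i < j)%N -> (j <= n)%N -> Q j -> F i < F j)].
Proof.
elim: n => [|n IH] [i0 /andP [hi0 qi0]].
  move: hi0; rewrite leqn0 => /eqP e; subst i0.
  exists 0%N; split => // j; first by rewrite leqn0 => /eqP ->.
  by move=> lt le; move: (leq_trans lt le).
have [ex|nex] := boolP [exists i : 'I_n.+1, Q i].
  case/existsP: ex => i qi.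
  have [k [kn qk kmin klast]] := IH (ex_intro _ (i : nat) (introT andP (conj (ltn_ord i : (i <= n)%N) qi))).
  case: (boolP (Q n.+1 && (F n.+1 <= F k))) => [/andP [qn fn]|h].
    exists n.+1; split => //.
      move=> j; rewrite leq_eqVlt => /orP [/eqP -> //|jn] qj.
      exact: le_trans fn (kmin j jn qj).
    by move=> j lt le; move: (leq_ltn_trans le lt); rewrite ltnn.
  exists k; split => //; first by apply: leqW.
    move=> j; rewrite leq_eqVlt => /orP [/eqP ->|jn] qj; last exact: kmin.
    by move: h; rewrite qj /= -ltNge => /ltW.
  move=> j lt; rewrite leq_eqVlt => /orP [/eqP ->|jn] qj; last exact: klast.
  by move: h; rewrite qj /= -ltNge.
have qn : Q n.+1.
  move: hi0; rewrite leq_eqVlt => /orP [/eqP e|lt]; first by rewrite -e.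
  by move/existsPn: nex => /(_ (Ordinal lt)); rewrite qi0.
exists n.+1; split => //.
  move=> j; rewrite leq_eqVlt => /orP [/eqP -> //|jn] qj.
  by move/existsPn: nex => /(_ (Ordinal jn)); rewrite qj.
by move=> j lt le; move: (leq_ltn_trans le lt); rewrite ltnn.
Qed.

Unset Implicit Arguments.

Theorem lemma2p4 (p : nat) (K : fieldType) (v : K -> rat) (pw : rat -> K)
  (Hp : prime p) (HK : padic_MN_like p v pw)
  (P : {poly K}) (N : nat) (HN : N = (size P).-1) (HN0 : (0 < N)%N)
  (Ha0 : rcoef P 0 != 0) (HaN : rcoef P N != 0)
  (m : nat) (Hm : breakpoint v (rcoef P) N m) (HmN : (m < N)%N)
  (Hmax : forall k, breakpoint v (rcoef P) N k -> (k < N)%N -> (k <= m)%N)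
  (s : rat)
  (Hs : s = (v (rcoef P N) - v (rcoef P m)) / (N%:R - m%:R))
  (u : K) (Hu0 : u != 0) (Hu : v u = 0) :
  let Pu := P \Po ('X + (u * pw s)%:P) in
  (forall x y : rat, 0 <= x <= m%:R ->
     (on_NP v (rcoef Pu) N x y <-> on_NP v (rcoef P) N x y))
  /\
  (forall k : nat, (m < k <= N)%N -> rcoef Pu k != 0 ->
     v (rcoef P m) + s * (k%:R - m%:R) <= v (rcoef Pu k)
     /\ above_NP v (rcoef P) N k%:R (v (rcoef Pu k))).
Proof.
move=> Pu.
have HvM : forall x y : K, x != 0 -> y != 0 -> v (x * y) = v x + v y := vM HK.
have HvD : forall x y : K, x != 0 -> y != 0 -> x + y != 0 ->
    Num.min (v x) (v y) <= v (x + y) := vD HK.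
set c := u * pw s.
have c0 : c != 0 by rewrite mulf_neq0 // (pw_neq0 HK).
have vc : v c = s by rewrite /c HvM // ?(pw_neq0 HK) // Hu (v_pw HK) add0r.
have hsP : size P = N.+1.
  rewrite HN prednK // lt0n; apply/eqP => e; move: HN0; by rewrite HN e.
have hsPu : size Pu = N.+1 by rewrite /Pu size_comp_poly2 // size_XaddC.
set a := rcoef P in Ha0 HaN Hm Hmax Hs *.
set b := rcoef Pu.
have aE j : a j = P`_(N - j) by rewrite /a /rcoef hsP.
have bE k : b k = \sum_(i < N.+1) P`_i * ('C(i, N - k)%:R * c ^+ (i - (N - k))).
  rewrite /b /rcoef hsPu /=.
  rewrite coef_comp_poly hsP; apply: eq_bigr => i _.
  by rewrite coef_XaddCX.
pose f j := v (a j) - s * j%:R.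
have hNm : (m%:R : rat) < N%:R by rewrite ltr_nat.
have fN : f N = f m.
  rewrite /f; have d0 : (N%:R - m%:R : rat) != 0 by rewrite subr_eq0 gt_eqF.
  have : s * (N%:R - m%:R) = v (a N) - v (a m) by rewrite Hs divfK.
  lra.
have T : forall k (i : 'I_N.+1), (k <= N)%N ->
    P`_i * ('C(i, N - k)%:R * c ^+ (i - (N - k))) != 0 ->
    [/\ (N - i <= k)%N, a (N - i)%N != 0 & f (N - i)%N + s * k%:R <=
        v (P`_i * ('C(i, N - k)%:R * c ^+ (i - (N - k))))].
  move=> k i hk; rewrite !mulf_eq0 !negb_or => /and3P [pi ci _].
  have iN : (i <= N)%N := ltn_ord i.
  have hi : (N - k <= i)%N.
    rewrite leqNgt; apply/negP => lt; move: ci; by rewrite bin_small // mulr0n eqxx.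
  have ha : a (N - i)%N = P`_i by rewrite aE subKn.
  have e : (i - (N - k))%N = (k - (N - i))%N by clear -hi iN hk; lia.
  split; [clear -hi iN hk; lia | by rewrite ha |].
  rewrite !HvM ?mulf_neq0 ?expf_neq0 // ?(vX HvM) // vc e natrB; last by clear -hi iN hk; lia.
  have := vnat HvM HvD ci; rewrite /f ha; lra.
have [mN am0 [hm minm] nointm] := Hm.
have vf j : v (a j) = f j + s * j%:R by rewrite /f; ring.
have hN := hull_pt v (leqnn N) HaN.
have supL : forall j, (j < m)%N -> a j != 0 -> f m <= f j.
  move=> j jm aj; rewrite leNgt; apply/negP => hlt.
  have jN : (j <= N)%N by clear -jm HmN; lia.
  have hj := hull_pt v jN aj.
  have hjN : (j%:R : rat) < N%:R by rewrite ltr_nat; clear -jm HmN; lia.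
  have hjm : ((j%:R : rat) <= m%:R) && ((m%:R : rat) <= N%:R).
    apply/andP; split; rewrite ler_nat; clear -jm HmN; lia.
  have := hull_seg hjN hjm hj hN; move/minm => h.
  have d0 : (N%:R - j%:R : rat) != 0 by rewrite subr_eq0 gt_eqF.
  apply: (arith1 (f j) (f m) s j%:R m%:R N%:R ((m%:R - j%:R)/(N%:R - j%:R))).
  - by rewrite divfK.
  - by rewrite ltr_pdivrMr ?subr_gt0 // mul1r; lra.
  - exact: hlt.
  - by move: h; rewrite !vf fN.
have sup : forall j, (j <= N)%N -> a j != 0 -> f m <= f j.
  move=> j jN aj; rewrite leNgt; apply/negP => hlt.
  have [k [kN ak kmin klast]] :=
    argmin_last (Q := fun i => a i != 0) f (ex_intro _ j (introT andP (conj jN aj))).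
  have fk : f k < f m by apply: le_lt_trans (kmin j jN aj) hlt.
  have [km|mk] := ltnP k m.
    by move: (supL k km ak); rewrite leNgt fk.
  have km' : (m < k)%N.
    rewrite ltn_neqAle mk andbT; apply/eqP => e; move: fk; by rewrite e ltxx.
  have kN' : (k < N)%N.
    rewrite ltn_neqAle kN andbT; apply/eqP => e; move: fk; by rewrite e fN ltxx.
  suff bk : breakpoint v a N k by move: (Hmax k bk kN'); rewrite leqNgt km'.
  have lin : forall i : 'I_N.+1, a i != 0 -> f k + s * (i : nat)%:R <= v (a i).
    move=> i ai; have := kmin i (ltn_ord i) ai; rewrite vf; lra.
  split => //.
    split; first exact: hull_pt.
    move=> y' hy'; have := hull_lin lin hy'; rewrite vf; lra.
  case=> x1 [y1 [x2 [y2 [t [[h1 _] [h2 _] /andP [lt1 lt2] t01 [ek ey]]]]]].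
  have l1 := hull_lin lin h1; have l2 := hull_lin lin h2.
  have e2 : y2 = f k + s * x2.
    apply: (arith2 (f k) s k%:R x1 x2 y1 y2 t) => //.
    by rewrite -ey vf.
  have hx2 : x2 <= k%:R.
    apply: (hull_tight (k := k) lin _ h2 e2).
    move=> i ai ei; rewrite leqNgt; apply/negP => ki.
    move: (klast i ki (ltn_ord i) ai) (vf i); rewrite ei; lra.
  by move: (lt_le_trans lt2 hx2); rewrite ltxx.
have linm : forall i : 'I_N.+1, a i != 0 -> f m + s * (i : nat)%:R <= v (a i).
  move=> i ai; have := sup i (ltn_ord i) ai; rewrite vf; lra.
have mgood : forall j : 'I_m, a j != 0 -> f m < f j.
  move=> j aj; have jm := ltn_ord j; have jN : (j <= N)%N by clear -jm HmN; lia.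
  rewrite lt_neqAle sup // andbT; apply/eqP => e.
  apply: nointm.
  have onj : on_NP v a N j%:R (v (a j)).
    split; first exact: hull_pt.
    move=> y' hy'; have := hull_lin linm hy'; rewrite vf -e; lra.
  have onN : on_NP v a N N%:R (v (a N)).
    split; first exact: hull_pt.
    move=> y' hy'; have := hull_lin linm hy'; rewrite vf fN; lra.
  have d0 : (N%:R - j%:R : rat) != 0 by rewrite subr_eq0 gt_eqF // ltr_nat; clear -jm HmN; lia.
  have jmr : (j%:R : rat) < m%:R by rewrite ltr_nat.
  exists j%:R, (v (a j)), N%:R, (v (a N)), ((N%:R - m%:R)/(N%:R - j%:R)); split => //.
  - by rewrite jmr hNm.
  - apply/andP; split; first by apply: divr_gt0; lra.
    by rewrite ltr_pdivrMr ?mul1r; lra.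
  - split; first by field.
    rewrite !vf -e fN; field => //.
pose good j := [&& (j <= N)%N, a j != 0 & [forall j' : 'I_j, (a j' != 0) ==> (f j < f j')]].
have goodm : good m.
  rewrite /good mN am0 /=; apply/forallP => j; apply/implyP => aj; exact: mgood.
have G2 : forall j, good j -> b j != 0 /\ v (b j) = v (a j).
  move=> j /and3P [jN aj /forallP gj].
  have i0lt : (N - j < N.+1)%N by clear -jN; lia.
  rewrite bE (bigD1 (Ordinal i0lt)) //=.
  have -> : P`_(N - j) * ('C(N - j, N - j)%:R * c ^+ (N - j - (N - j))) = a j.
    by rewrite binn subnn expr0 mulr1 aE ?mulr1.
  apply: (vstrict HvM HvD aj) => hS.
  apply: (vsum HvD (Q := fun z => v (a j) < z)) hS.
  - by move=> x y hx hy; rewrite lt_min hx hy.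
  - by move=> x y hx hy; exact: lt_le_trans hx hy.
  - move=> i hi ti; have [h1 h2 h3] := T j i jN ti.
    move: hi; rewrite -val_eqE /= => hi.
    have ne : (N - i < j)%N by have := ltn_ord i; clear -h1 hi; lia.
    have := gj (Ordinal ne); rewrite /= h2 /= => lt.
    rewrite vf; lra.
have DomP : forall j, (j <= N)%N -> a j != 0 -> exists g, [/\ good g, (g <= j)%N & f g <= f j].
  elim/ltn_ind => j IH jN aj.
  case gj: (good j); first by exists j; rewrite lexx leqnn.
  move: gj; rewrite /good jN aj /= => /negbT /forallPn [j'].
  rewrite negb_imply => /andP [aj' nlt].
  have j'N : (j' <= N)%N by have := ltn_ord j'; clear -jN; lia.
  have [g [gg gj' fg]] := IH j' (ltn_ord j') j'N aj'.
  exists g; split => //; first by apply: leq_trans gj' (ltnW (ltn_ord j')).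
  by apply: le_trans fg _; rewrite leNgt.
have DomPu : forall k, (k <= N)%N -> b k != 0 ->
    exists j, [/\ (j <= k)%N, a j != 0 & f j + s * k%:R <= v (b k)].
  move=> k kN bk.
  have [j [jk aj jmin _]] := argmin_last (Q := fun i => a i != 0) f
    (ex_intro _ 0%N (introT andP (conj (leq0n k) Ha0))).
  exists j; split => //.
  move: bk; rewrite bE => bk.
  apply: (vsum HvD (Q := fun z => f j + s * k%:R <= z)) bk.
  - by move=> x y hx hy; rewrite le_min hx hy.
  - by move=> x y hx hy; exact: le_trans hx hy.
  - move=> i _ ti; have [h1 h2 h3] := T k i kN ti.
    have := jmin _ h1 h2; lra.
split; last first.
  move=> k /andP [mk kN] bk.
  have [j [jk aj hj]] := DomPu k kN bk.
  have fj := sup j (leq_trans jk kN) aj.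
  have B : v (a m) + s * (k%:R - m%:R) <= v (b k) by rewrite vf; lra.
  split => //.
  exists (v (a m) + (k%:R - m%:R)/(N%:R - m%:R) * (v (a N) - v (a m))); split.
    apply: hull_seg hNm _ (hull_pt v mN am0) hN.
    by apply/andP; split; rewrite ler_nat; clear -mk kN; lia.
  have d0 : (N%:R - m%:R : rat) != 0 by rewrite subr_eq0 gt_eqF.
  have -> : (k%:R - m%:R)/(N%:R - m%:R) * (v (a N) - v (a m)) = s * (k%:R - m%:R).
    by rewrite Hs; field.
  exact: B.
pose cg j := if good j then a j else 0.
have cgE : forall j, cg j != 0 -> good j /\ cg j = a j.
  by move=> j; rewrite /cg; case: (good j); rewrite ?eqxx.
have G1 : forall i : 'I_N.+1, cg i != 0 -> a i != 0 /\ v (a i) = v (cg i).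
  move=> i /cgE [gi ->]; split => //; by case/and3P: gi.
have G2' : forall i : 'I_N.+1, cg i != 0 -> b i != 0 /\ v (b i) = v (cg i).
  move=> i /cgE [gi ->]; exact: G2.
have linc : forall i : 'I_N.+1, cg i != 0 -> f m + s * (i : nat)%:R <= v (cg i).
  move=> i /cgE [gi ->]; case/and3P: gi => iN ai _.
  have := sup i iN ai; rewrite vf; lra.
have RP : forall i : 'I_N.+1, a i != 0 -> exists g : 'I_N.+1,
    [/\ cg g != 0, (g <= i)%N & v (cg g) + s * ((i : nat)%:R - (g : nat)%:R) <= v (a i)].
  move=> i ai; have [g [gg gi fg]] := DomP i (ltn_ord i) ai.
  have gN : (g < N.+1)%N by case/and3P: gg.
  have ag : a g != 0 by case/and3P: gg.
  exists (Ordinal gN); rewrite /= /cg gg; split => //.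
  rewrite !vf; lra.
have RPu : forall i : 'I_N.+1, b i != 0 -> exists g : 'I_N.+1,
    [/\ cg g != 0, (g <= i)%N & v (cg g) + s * ((i : nat)%:R - (g : nat)%:R) <= v (b i)].
  move=> i bi; have [j [ji aj hj]] := DomPu i (ltn_ord i) bi.
  have [g [gg gj fg]] := DomP j (leq_trans ji (ltn_ord i)) aj.
  have gN : (g < N.+1)%N by case/and3P: gg.
  have ag : a g != 0 by case/and3P: gg.
  exists (Ordinal gN); rewrite /= /cg gg; split => //; first exact: leq_trans gj ji.
  rewrite !vf; lra.
have hm' : in_hull v cg N m%:R (v (a m)).
  have e : cg m = a m by rewrite /cg goodm.
  by have := hull_pt v (c := cg) mN; rewrite e; apply.
have D : forall (c' : nat -> K), (forall i : 'I_N.+1, c' i != 0 -> exists g : 'I_N.+1,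
      [/\ cg g != 0, (g <= i)%N & v (cg g) + s * ((i : nat)%:R - (g : nat)%:R) <= v (c' i)]) ->
    forall x y, in_hull v c' N x y -> x <= m%:R ->
    exists y', y' <= y /\ in_hull v cg N x y'.
  move=> c' R x y h xm.
  have [xg [yg [hg xgx hy]]] := hull_reduce R h.
  have lg := hull_lin linc hg.
  have [e|ne] := eqVneq xg x.
    exists yg; split; last by rewrite -e.
    by move: hy; rewrite e subrr mulr0 addr0.
  have lt : xg < x by rewrite lt_neqAle ne xgx.
  have ltm : xg < m%:R by apply: lt_le_trans lt xm.
  have d0 : (m%:R - xg) != 0 by rewrite subr_eq0 gt_eqF.
  exists (yg + (x - xg)/(m%:R - xg) * (v (a m) - yg)); split.
    apply: (arith3 ((x - xg)/(m%:R - xg)) m%:R xg x yg y (v (a m)) s).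
    - by apply: divr_ge0; lra.
    - by rewrite divfK.
    - rewrite vf; lra.
    - exact: hy.
  apply: hull_seg ltm _ hg hm'.
  by rewrite (ltW lt) xm.
move=> x y /andP [_ xm]; split.
  case=> hu minu.
  have [y' [yy' hy']] := D b RPu x y hu xm.
  have e : y = y'.
    by apply/eqP; rewrite eq_le yy' andbT; apply: minu; exact: hull_transfer G2' hy'.
  split; first by rewrite e; exact: hull_transfer G1 hy'.
  move=> y2 h2; have [y3 [y32 h3]] := D a RP x y2 h2 xm.
  exact: le_trans (minu _ (hull_transfer G2' h3)) y32.
case=> hp minp.
have [y' [yy' hy']] := D a RP x y hp xm.
have e : y = y'.
  by apply/eqP; rewrite eq_le yy' andbT; apply: minp; exact: hull_transfer G1 hy'.
split; first by rewrite e; exact: hull_transfer G2' hy'.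
move=> y2 h2; have [y3 [y32 h3]] := D b RPu x y2 h2 xm.
exact: le_trans (minp _ (hull_transfer G1 h3)) y32.
Qed.
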